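(* The collection $\mathcal Q_{tree}$ is UME-learnable.
   Context: Index the nodes of an infinite complete binary tree by $\mathbb N$ in level order: the root is $1$, and node $m$ has left child $2m$ and right child $2m+1$. For an infinite binary string $b=(b_1,b_2,\dots)\in\{0,1\}^{\mathbb N}$, its branch is the sequence of nodes $v_0(b)=1$, $v_j(b)=2v_{j-1}(b)+b_j$ for $j\ge1$. Let $q^{(b)}\in[0,1]^{\mathbb N}$ be given by $q^{(b)}_m=\tfrac23$ if $m=v_j(b)$ for some $j\ge0$ and $q^{(b)}_m=\tfrac13$ otherwise. $\mathcal Q_{tree}=\{\mathrm{Prod}(q^{(b)}):b\in\{0,1\}^{\mathbb N}\}$, where $\mathrm{Prod}(q)$ is the product measure on $\{0,1\}^{\mathbb N}$ with independent coordinates $X_m\sim\mathrm{Bernoulli}(q_m)$. A collection $\mathcal Q$ of probability measures on $\{0,1\}^{\mathbb N}$ is UME-learnable if there exist (measurable) estimators $\mathcal A_n:(\{0,1\}^{\mathbb N})^n\to[0,1]^{\mathbb N}$ such that for every $\mu\in\mathcal Q$, $\mathbb E_{S\sim\mu^n}\|\mathcal A_n(S)-\mathrm{Mean}(\mu)\|_\infty\to0$ as $n\to\infty$, where $S$ consists of $n$ i.i.d. draws from $\mu$ and $\mathrm{Mean}(\mu)_j=\mathbb E[X_j]$. *)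

(* Defs.v *)
From HB Require Import structures.
From mathcomp Require Import all_boot all_order all_algebra.
From mathcomp Require Import all_classical all_reals all_analysis.
Set Implicit Arguments. Unset Strict Implicit. Unset Printing Implicit Defensive.
Import Order.TTheory GRing.Theory Num.Theory.
Local Open Scope classical_set_scope.
Local Open Scope ring_scope.

(* Branch of the infinite binary tree determined by b.
   The paper's bit b_{j} (j >= 1) is [b j.-1] here, i.e. b : nat -> bool is 0-indexed.
   branch_node b j = v_j(b): v_0 = 1, v_{j+1} = 2 v_j + b_{j+1}. *)
Fixpoint branch_node (b : nat -> bool) (j : nat) : nat :=
  match j with
  | 0 => 1
  | j'.+1 => (branch_node b j').*2 + b j'
  end.

Definition on_branch (b : nat -> bool) (m : nat) : Prop := exists j, branch_node b j = m.

(* Coordinates of {0,1}^N are indexed in Rocq by k : nat, and coordinate k stands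
   for the paper's coordinate / tree node m = k+1 (the paper's N starts at 1). *)
Definition qtree (R : realType) (b : nat -> bool) (k : nat) : R :=
  if `[< on_branch b k.+1 >] then 2 / 3 else 1 / 3.

Definition sample (n : nat) := 'I_n -> nat -> bool.

(* Cylinder generators of the product sigma-algebra on ({0,1}^N)^n. *)
Definition cyl (n : nat) : set (set (sample n)) :=
  [set E | exists (i : 'I_n) (m : nat) (c : bool), E = [set s | s i m = c]].
Arguments cyl : clear implicits.

(* A map sample n -> [0,1]^N is measurable (product sigma-algebras) iff every
   coordinate is measurable w.r.t. the cylinder sigma-algebra and the Borel sets of R. *)
Definition estimator_measurable (R : realType) (n : nat) (f : sample n -> nat -> R) : Prop :=
  forall (j : nat) (B : set R), measurable B -> <<s cyl n >> ((fun s => f s j) @^-1` B).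

Definition mutually_independent (R : realType) (d : measure_display) (T : measurableType d)
    (P : probability T R) (X : nat -> nat -> T -> bool) : Prop :=
  forall (F : seq (nat * nat)) (c : nat * nat -> bool), uniq F ->
    P [set w | all (fun p => X p.1 p.2 w == c p) F] =
    (\prod_(p <- F) P [set w | X p.1 p.2 w = c p])%E.

(* X is an i.i.d. sequence (indexed by the first argument) of draws from
   Prod(q): all coordinates independent, X k m ~ Bernoulli(q m). *)
Definition iid_product_bernoulli (R : realType) (d : measure_display) (T : measurableType d)
    (P : probability T R) (q : nat -> R) (X : nat -> nat -> T -> bool) : Prop :=
  [/\ forall k m, measurable [set w | X k m w],
      forall k m, P [set w | X k m w] = (q m)%:E &
      mutually_independent P X].

Definition sup_err (R : realType) (a q : nat -> R) : \bar R :=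
  ereal_sup (range (fun j => (`|a j - q j|)%:E)).

(* Main.v *)
Require Import Defs.
From HB Require Import structures.
From mathcomp Require Import all_boot all_order all_algebra.
From mathcomp Require Import all_classical all_reals all_analysis.
From mathcomp Require Import zify ring lra.
Import Order.TTheory GRing.Theory Num.Theory.
Set Implicit Arguments. Unset Strict Implicit. Unset Printing Implicit Defensive.
Local Open Scope classical_set_scope.
Local Open Scope ring_scope.

(* Proof strategy: the estimator follows the tree from the root; at depth j it
   chooses the left child iff some descending path of length 2(j+1) from the
   left child has at least half ones among all n samples.  A union bound over
   exact bit-patterns (using the product rule) shows that level j errs with
   probability at most (4 (8/9)^n)^(j+1); on the complement of all errors the
   estimate is exact, so the expected sup error is at most 8 (8/9)^n. *)
Section part1.
Local Open Scope nat_scope.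

Fixpoint desc (c : nat) (t : nat -> bool) (k : nat) : nat :=
  match k with 0 => c | k'.+1 => (desc c t k').*2 + t k' end.

Lemma branch_desc b j k :
  branch_node b (j + k) = desc (branch_node b j) (fun i => b (j + i)) k.
Proof. by elim: k => [|k IH]; rewrite ?addn0 // addnS /= IH. Qed.

Lemma branch_desc1 b k : branch_node b k = desc 1 b k.
Proof. by rewrite -[k]add0n branch_desc. Qed.

Lemma desc_ge c t k : c * 2 ^ k <= desc c t k.
Proof. elim: k => [|k IH] /=; first by rewrite muln1. rewrite expnS; lia. Qed.

Lemma desc_lt c t k : desc c t k < c.+1 * 2 ^ k.
Proof. elim: k => [|k IH] /=; first by rewrite muln1. rewrite expnS; lia. Qed.

Lemma desc_pos c t k : 0 < c -> 0 < desc c t k.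
Proof. move=> c0; have := desc_ge c t k; have := expn_gt0 2 k; nia. Qed.

Lemma desc_incr c t k k' : 0 < c -> k < k' -> desc c t k < desc c t k'.
Proof.
move=> c0; elim: k' => [//|k' IH]; rewrite ltnS leq_eqVlt => /orP [/eqP ->|/IH h] /=.
  have := desc_pos t k' c0; lia.
have := desc_pos t k' c0; lia.
Qed.

Lemma desc_inj c t k k' : 0 < c -> desc c t k = desc c t k' -> k = k'.
Proof.
move=> c0 e; case: (ltngtP k k') => // h.
  by have := desc_incr t c0 h; rewrite e ltnn.
by have := desc_incr t c0 h; rewrite e ltnn.
Qed.

Lemma branch_gt b j : j < branch_node b j.
Proof.
rewrite branch_desc1; apply: (leq_trans (ltn_expl j (isT : 1 < 2))).
by have := desc_ge 1 b j; rewrite mul1n.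
Qed.

Lemma branch_pos b j : 0 < branch_node b j.
Proof. by rewrite branch_desc1 desc_pos. Qed.

Lemma off_branch b c t k : ~ on_branch b c -> 0 < c -> ~ on_branch b (desc c t k).
Proof.
move=> nb c0; elim: k => [//|k IH] [[|j] /= e].
  by have := desc_pos t k c0; lia.
apply: IH; exists j; lia.
Qed.

End part1.

Section estimator.
Local Open Scope nat_scope.
Variable n : nat.
Implicit Type s : sample n.

Definition cnt s (m : nat) : nat := \sum_(i < n) s i m.-1.
Definition pathsum s c L (t : nat -> bool) := \sum_(k < L) cnt s (desc c t k).
Definition test s c L : bool :=
  [exists t : L.-tuple bool, n * L <= (pathsum s c L (fun k => nth false t k)).*2].
Definition Lj j := (j.+1).*2.
Fixpoint est s j := match j with
  | 0 => 1
  | j'.+1 => if test s (est s j').*2 (Lj j') then (est s j').*2 else (est s j').*2.+1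
  end.

Definition agree_below K s s' := forall i m, m < K -> s i m = s' i m.

Lemma agree_le K K' s s' : K' <= K -> agree_below K s s' -> agree_below K' s s'.
Proof. by move=> le h i m mK; apply: h; apply: leq_trans le. Qed.

Lemma cnt_agree K s s' m : m.-1 < K -> agree_below K s s' -> cnt s m = cnt s' m.
Proof. by move=> mK h; apply: eq_bigr => i _; rewrite h. Qed.

Lemma pathsum_agree a L K s s' c t : c.+1 <= 2 ^ a -> 2 ^ (a + L) <= K ->
  agree_below K s s' -> pathsum s c L t = pathsum s' c L t.
Proof.
move=> ca aK h; apply: eq_bigr => k _; apply: (cnt_agree _ h).
have := desc_lt c t k; have : 2 ^ (a + k) <= 2 ^ (a + L).
  by rewrite leq_exp2l // leq_add2l ltnW.
move=> e1 e2.
have e3 : c.+1 * 2 ^ k <= 2 ^ (a + k) by rewrite expnD leq_mul2r ca orbT.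
lia.
Qed.

Lemma test_agree a L K s s' c : c.+1 <= 2 ^ a -> 2 ^ (a + L) <= K ->
  agree_below K s s' -> test s c L = test s' c L.
Proof.
move=> ca aK h; rewrite /test; apply: eq_existsb => t.
by rewrite (pathsum_agree _ ca aK h).
Qed.

Lemma est_lt s j : est s j < 2 ^ j.+1.
Proof.
elim: j => [//|j IH] /=; rewrite expnS.
by case: ifP => _; lia.
Qed.

Lemma est_agree j s s' : agree_below (2 ^ (3 * j + 4)) s s' -> est s j = est s' j.
Proof.
elim: j => [//|j IH] h /=.
have h' : agree_below (2 ^ (3 * j + 4)) s s'.
  by apply: agree_le h; rewrite leq_exp2l //; lia.
rewrite -(IH h').
rewrite (@test_agree j.+2 (Lj j) (2 ^ (3 * j.+1 + 4)) s s') //.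
- by have := est_lt s j; rewrite !expnS; lia.
- by rewrite leq_exp2l // /Lj; lia.
Qed.

Lemma est_pos s j : 0 < est s j.
Proof. by elim: j => //= j IH; case: ifP => _; lia. Qed.

End estimator.

Definition Aest (R : realType) n (s : sample n) (k : nat) : R :=
  if [exists j : 'I_k.+1, est s j == k.+1] then 2 / 3 else 1 / 3.

Lemma Aest_agree (R : realType) n k (s s' : sample n) :
  agree_below (2 ^ (3 * k + 4)) s s' -> Aest R s k = Aest R s' k.
Proof.
move=> h; rewrite /Aest; congr (if _ then _ else _); apply: eq_existsb => j.
rewrite (@est_agree n j s s') //; apply: agree_le h.
by rewrite leq_exp2l //; have := ltn_ord j; lia.
Qed.

Fixpoint allseq (N : nat) : seq (seq bool) :=
  if N is N'.+1 then [seq b :: c | b <- [:: true; false], c <- allseq N'] else [:: [::]].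

Lemma mem_allseq N c : size c = N -> c \in allseq N.
Proof.
elim: N c => [|N IH] [|b c] //= [e].
by case: b; rewrite mem_cat ?mem_cat map_f ?orbT // IH.
Qed.

Lemma size_allseq N : size (allseq N) = (2 ^ N)%N.
Proof. elim: N => //= N IH; rewrite !size_cat !size_map IH expnS /=; lia. Qed.

Definition ubig (U A : Type) (l : seq A) (f : A -> set U) : set U :=
  foldr (fun c B => f c `|` B) set0 l.

Lemma ubigP (U : Type) (A : eqType) (l : seq A) (f : A -> set U) u :
  ubig l f u <-> exists c, c \in l /\ f c u.
Proof.
elim: l => [|a l IH] /=; first by split => // [[c []]].
split.
  case=> [h|/IH [c [cl h]]]; first by exists a; rewrite mem_head.
  by exists c; rewrite in_cons cl orbT.
move=> [c []]; rewrite in_cons => /orP [/eqP ->|cl] h; first by left.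
by right; apply/IH; exists c.
Qed.

Section findep.
Variables (U : Type) (I : eqType) (Z : I -> U -> bool) (M : set U -> Prop).
Hypotheses (M0 : M set0) (MC : forall A, M A -> M (~` A))
  (MU : forall A B, M A -> M B -> M (A `|` B)) (MZ : forall i, M [set u | Z i u]).

Let MT : M setT. Proof. by rewrite -setC0; apply: MC. Qed.
Let MI A B : M A -> M B -> M (A `&` B).
Proof. by move=> hA hB; rewrite -[A `&` B]setCK setCI; apply/MC/MU; apply: MC. Qed.
Let MZb i b : M [set u | Z i u = b].
Proof.
case: b; first exact: MZ.
have -> : [set u | Z i u = false] = ~` [set u | Z i u].
  by apply/seteqP; split => u /=; [move=> -> | move/negP/negbTE].
exact/MC/MZ.
Qed.

Definition pat (F : seq I) (c : seq bool) := [set u | map (fun i => Z i u) F = c].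

Lemma M_pat F c : M (pat F c).
Proof.
elim: F c => [|i F IH] [|b c].
- by have -> : pat [::] [::] = setT by apply/seteqP; split.
- by have -> : pat [::] (b :: c) = set0 by apply/seteqP; split.
- by have -> : pat (i :: F) [::] = set0 by apply/seteqP; split.
have -> : pat (i :: F) (b :: c) = [set u | Z i u = b] `&` pat F c.
  apply/seteqP; split => u; rewrite /pat /=.
  by case=> -> ->.
  by case=> -> ->.
exact: MI.
Qed.

Lemma M_ubig (A : Type) (l : seq A) f : (forall c, M (f c)) -> M (ubig l f).
Proof. by move=> h; elim: l => //= a l IH; apply: MU. Qed.

Lemma predE_ubig (F : seq I) (pr : seq bool -> bool) :
  [set u | pr (map (fun i => Z i u) F)] = ubig [seq c <- allseq (size F) | pr c] (pat F).
Proof.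
apply/seteqP; split => u /=.
  move=> h; apply/ubigP; exists (map (fun i => Z i u) F); split => //.
  by rewrite mem_filter h mem_allseq // size_map.
by move=> /ubigP [c []]; rewrite mem_filter => /andP [h _] /= ->.
Qed.

Lemma M_dep (F : seq I) (phi : U -> bool) :
  (forall u u', (forall i, i \in F -> Z i u = Z i u') -> phi u = phi u') ->
  M [set u | phi u].
Proof.
move=> dep.
pose pr c := `[< exists u0, phi u0 /\ map (fun i => Z i u0) F = c >].
have -> : [set u | phi u] = [set u | pr (map (fun i => Z i u) F)].
  apply/seteqP; split => u /=.
    by move=> h; apply/asboolP; exists u.
  move/asboolP => [u0 [h e]].
  suff -> : phi u = phi u0 by [].
  apply: dep => i iF.
  have : map (fun i => Z i u) F = map (fun i => Z i u0) F by rewrite e.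
  by move/eq_in_map => /(_ i iF).
by rewrite predE_ubig; apply: M_ubig => c; apply: M_pat.
Qed.
End findep.

Lemma Aest_01 (R : realType) n (s : sample n) j : 0 <= Aest R s j <= 1.
Proof. by rewrite /Aest; case: ifP => _; apply/andP; split; lra. Qed.

Definition coordF n K : seq ('I_n * nat) := [seq (i, m) | i <- enum 'I_n, m <- iota 0 K].

Lemma mem_coordF n K (i : 'I_n) m : (m < K)%N -> (i, m) \in coordF n K.
Proof. by move=> mK; apply/allpairsP; exists (i, m); rewrite mem_enum mem_iota. Qed.

Lemma agree_coordF n K (s s' : sample n) :
  (forall p, p \in coordF n K -> s p.1 p.2 = s' p.1 p.2) -> agree_below K s s'.
Proof. by move=> h i m mK; apply: (h (i, m)); apply: mem_coordF. Qed.

Lemma Aest_meas (R : realType) n : estimator_measurable (@Aest R n).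
Proof.
move=> j B mB.
have -> : ((fun s : sample n => Aest R s j) @^-1` B) = [set s : sample n | `[< B (Aest R s j) >]].
  by apply/funext => s; apply/propext; split => /=; [move=> h; apply/asboolP | move/asboolP].
apply: (@M_dep _ _ (fun (p : 'I_n * nat) (s : sample n) => s p.1 p.2) _ _ _ _ _
  (coordF n (2 ^ (3 * j + 4)))).
- exact: sigma_algebra0.
- by move=> A hA; rewrite -setTD; apply: sigma_algebraCD.
- by move=> A C hA hC; rewrite -bigcup2E; apply: sigma_algebra_bigcup => -[|[|k]]; rewrite /bigcup2 /=; [exact: hA|exact: hC|exact: sigma_algebra0].
- by move=> [i m]; apply: sub_sigma_algebra; exists i, m, true.
- by move=> s s' h; rewrite (Aest_agree R (agree_coordF h)).
Qed.

Definition ones (c : seq bool) : nat := \sum_(x <- c) (x : nat).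
Definition zeros (c : seq bool) : nat := \sum_(x <- c) ((~~ x) : nat).

Lemma ones_zeros c : (ones c + zeros c)%N = size c.
Proof.
elim: c => [|x c IH]; first by rewrite /ones /zeros !big_nil.
by rewrite /ones /zeros !big_cons /= -IH -/(ones c) -/(zeros c); case: x => /=; lia.
Qed.

Definition wt (R : realType) (q0 : R) (c : seq bool) : R :=
  \prod_(x <- c) (if x then q0 else 1 - q0).

Lemma wt13 (R : realType) c : wt (1 / 3 : R) c = (1 / 3) ^+ size c * 2 ^+ zeros c.
Proof.
elim: c => [|x c IH]; first by rewrite /wt /zeros !big_nil expr0 mulr1.
rewrite /wt big_cons -/(wt _ c) IH /zeros big_cons -/(zeros c) /=.
by case: x => /=; rewrite ?add0n ?exprS; field.
Qed.

Lemma wt23 (R : realType) c : wt (2 / 3 : R) c = (1 / 3) ^+ size c * 2 ^+ ones c.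
Proof.
elim: c => [|x c IH]; first by rewrite /wt /ones !big_nil expr0 mulr1.
rewrite /wt big_cons -/(wt _ c) IH /ones big_cons -/(ones c) /=.
by case: x => /=; rewrite ?add0n ?add1n ?exprS; field.
Qed.

Lemma wt_bound (R : realType) (q0 : R) c M :
  size c = (M.*2)%N ->
  (q0 = 1 / 3 /\ (M <= ones c)%N) \/ (q0 = 2 / 3 /\ (ones c <= M)%N) ->
  wt q0 c <= (2 / 9) ^+ M.
Proof.
move=> sc h.
have e9 : (1 / 3 : R) ^+ size c = (1 / 9) ^+ M.
  by rewrite sc -mul2n exprM; congr (_ ^+ _); field.
have h2 k : (k <= M)%N -> (2 : R) ^+ k <= 2 ^+ M.
  by move=> kM; rewrite ler_eXn2l // ltr1n.
have -> : (2 / 9 : R) ^+ M = (1 / 9) ^+ M * 2 ^+ M.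
  by rewrite -exprMn; congr (_ ^+ _); field.
case: h => [[-> hM] | [-> hM]].
  rewrite wt13 e9 ler_pM2l ?exprn_gt0 //; apply: h2.
  by have := ones_zeros c; rewrite sc; lia.
by rewrite wt23 e9 ler_pM2l ?exprn_gt0 //; apply: h2.
Qed.

Import HBNNSimple.
Lemma int_mono d (T : measurableType d) (R : realType) (mu : {measure set T -> \bar R})
  (f g : T -> \bar R) : (forall x, (0 <= f x)%E) -> (forall x, (f x <= g x)%E) ->
  (\int[mu]_x f x <= \int[mu]_x g x)%E.
Proof.
move=> f0 fg.
have g0 x : (0 <= g x)%E by apply: le_trans (fg x).
rewrite !ge0_integralTE //; apply: ge_ereal_sup => _ [h hf <-].
apply: le_ereal_sup_tmp; exists (sintegral mu h) => //; exists h => // x.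
exact: le_trans (hf x) (fg x).
Qed.

Lemma mu_ubig d (T : measurableType d) (R : realType) (mu : {measure set T -> \bar R})
  (A : Type) (l : seq A) (f : A -> set T) : (forall c, measurable (f c)) ->
  (mu (ubig l f) <= \sum_(c <- l) mu (f c))%E.
Proof.
move=> mf; elim: l => [|a l IH] /=; first by rewrite big_nil measure0.
rewrite big_cons; apply: le_trans (measureU2 _ _ _) _ => //.
  by elim: l {IH} => //= a' l' IH'; apply: measurableU.
by apply: leeD.
Qed.

Lemma sum_const_le (R : realType) (A : eqType) (l : seq A) (P : pred A) (F : A -> R) (k : R) :
  (forall c, c \in l -> P c -> F c <= k) -> (forall c, 0 <= F c) -> 0 <= k ->
  \sum_(c <- l | P c) F c <= (size l)%:R * k.
Proof.
move=> hF F0 k0; elim: l hF => [|a l IH] hF; first by rewrite big_nil mul0r.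
rewrite big_cons /= mulrSr mulrDl mul1r addrC.
have hF' : forall c, c \in l -> P c -> F c <= k.
  by move=> c cl; apply: hF; rewrite in_cons cl orbT.
case: ifP => Pa; first by apply: lerD; [apply: IH | apply: hF; rewrite ?mem_head].
by apply: (le_trans (IH hF')); rewrite lerDl.
Qed.

Lemma allseq_size N c : c \in allseq N -> size c = N.
Proof.
elim: N c => [|N IH] c /=; first by rewrite inE => /eqP ->.
rewrite !mem_cat => /orP [/mapP [c' h ->] | /orP [/mapP [c' h ->] | //]] /=;
  by rewrite (IH _ h).
Qed.

Lemma desc_ext c t t' k : (forall i, (i < k)%N -> t i = t' i) -> desc c t k = desc c t' k.
Proof.
elim: k => [//|k IH] h /=; rewrite IH ?h // => i ik; apply: h; exact: ltnW.
Qed.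

Lemma pathsum_ext n (s : sample n) c L t t' : (forall i, (i < L)%N -> t i = t' i) ->
  pathsum s c L t = pathsum s c L t'.
Proof.
move=> h; apply: eq_bigr => k _; rewrite (@desc_ext c t t') // => i ik.
by apply: h; apply: ltn_trans ik _.
Qed.

Definition Fp n c t L : seq (nat * nat) :=
  [seq (i, (desc c t k).-1) | k <- iota 0 L, i <- iota 0 n].

Lemma Fp_uniq n c t L : (0 < c)%N -> uniq (Fp n c t L).
Proof.
move=> c0; apply: allpairs_uniq; rewrite ?iota_uniq // => -[k i] [k' i'] _ _ /= [ei ek].
have := desc_pos t k c0; have := desc_pos t k' c0 => p1 p2.
have e : desc c t k = desc c t k' by lia.
by rewrite (desc_inj c0 e) ei.
Qed.

Lemma Fp_size n c t L : size (Fp n c t L) = (L * n)%N.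
Proof. by rewrite size_allpairs !size_iota. Qed.

Lemma Fp_mem n c t L p : p \in Fp n c t L -> exists k, p.2 = (desc c t k).-1.
Proof. by case/allpairsP => -[k i] [_ _ ->]; exists k. Qed.

Lemma sum_iota_ord (G : nat -> nat) N : (\sum_(k <- iota 0 N) G k = \sum_(k < N) G k)%N.
Proof.
have -> : iota 0 N = index_iota 0 N by rewrite /index_iota subn0.
exact: big_mkord.
Qed.

Section prob.
Variables (R : realType) (b : nat -> bool) (d : measure_display) (T : measurableType d)
  (P : probability T R) (X : nat -> nat -> T -> bool).
Hypothesis H : iid_product_bernoulli P (qtree R b) X.

Let q := qtree R b.
Definition Zx (p : nat * nat) (w : T) := X p.1 p.2 w.
Definition Xs n (w : T) : sample n := fun (i : 'I_n) (m : nat) => X (i : nat) m w.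
Arguments Xs : clear implicits.

Lemma mX p : measurable [set w | Zx p w].
Proof. by case: H => h _ _; apply: h. Qed.

Lemma meas_pat F c : measurable (pat Zx F c).
Proof.
apply: M_pat => //; [exact: measurableC | exact: measurableU | exact: mX].
Qed.

Lemma PXb p bb : P [set w | Zx p w = bb] = (if bb then q p.2 else 1 - q p.2)%:E.
Proof.
case: H => _ h _; case: bb; first exact: h.
have -> : [set w | Zx p w = false] = ~` [set w | Zx p w].
  by apply/seteqP; split => u /=; [move=> -> | move/negP/negbTE].
rewrite probability_setC; last exact: mX.
by have := h p.1 p.2; rewrite -/q => e; rewrite /Zx e EFinB.
Qed.

Lemma P_pat F c q0 : uniq F -> size c = size F ->
  (forall p, p \in F -> q p.2 = q0) -> P (pat Zx F c) = (wt q0 c)%:E.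
Proof.
move=> uF sc hq.
pose c' p := nth false c (index p F).
have mc : map c' F = c.
  apply: (@eq_from_nth _ false); rewrite size_map // => k kF.
  by rewrite (nth_map (0, 0)%N) // /c' index_uniq.
have E : pat Zx F c = [set w | all (fun p => X p.1 p.2 w == c' p) F].
  apply/seteqP; split => w /=.
    move=> e; apply/allP => p pF; rewrite /c' -e (nth_map (0, 0)%N) ?index_mem //.
    by rewrite nth_index.
  move=> /allP h; apply: (@eq_from_nth _ false); rewrite size_map // => k kF.
  rewrite (nth_map (0, 0)%N) // /Zx; have := h (nth (0, 0)%N F k) (mem_nth _ kF).
  by move/eqP => ->; rewrite /c' index_uniq.
case: H => _ _ hi.
rewrite E hi //.
rewrite (eq_big_seq (fun p => (if c' p then q0 else 1 - q0)%:E)); last first.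
  by move=> p pF; rewrite -(hq p pF); exact: (PXb p (c' p)).
by rewrite prodEFin -mc /wt big_map.
Qed.

Section level.
Variable n : nat.
Let v j := branch_node b j.

Lemma pathsum_Fp w c L t :
  pathsum (Xs n w) c L t = ones (map (fun p => Zx p w) (Fp n c t L)).
Proof.
rewrite /ones big_map /Fp big_allpairs_dep /= sum_iota_ord /pathsum.
by apply: eq_bigr => k _; rewrite sum_iota_ord /cnt.
Qed.

Definition tb j := fun k => b (j.+1 + k).

Definition Ubad j : set T :=
  if b j then
    ubig (allseq (Lj j)) (fun tt =>
      ubig [seq c <- allseq (size (Fp n (v j).*2 (nth false tt) (Lj j))) |
             (n * Lj j <= (ones c).*2)%N]
           (pat Zx (Fp n (v j).*2 (nth false tt) (Lj j))))
  else ubig [seq c <- allseq (size (Fp n (v j).*2 (tb j) (Lj j))) |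
             ~~ (n * Lj j <= (ones c).*2)%N]
           (pat Zx (Fp n (v j).*2 (tb j) (Lj j))).

Lemma Ubad_meas j : measurable (Ubad j).
Proof.
rewrite /Ubad; case: (b j); repeat apply: M_ubig => //;
  by [exact: measurableU | move=> ?; apply: meas_pat |
      move=> ?; apply: M_ubig => //; [exact: measurableU | move=> ?; apply: meas_pat]].
Qed.


Lemma v_pos j : (0 < v j)%N.
Proof. exact: branch_pos. Qed.

Lemma v_bounds j : (2 ^ j <= v j)%N /\ (v j < 2 ^ j.+1)%N.
Proof.
rewrite /v branch_desc1; split; first by have := desc_ge 1 b j; rewrite mul1n.
by have := desc_lt 1 b j; rewrite expnS.
Qed.

Lemma v_inj j j' : v j = v j' -> j = j'.
Proof.
move=> e; case: (ltngtP j j') => // h.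
- have [_ h1] := v_bounds j; have [h2 _] := v_bounds j'.
  have : (2 ^ j.+1 <= 2 ^ j')%N by rewrite leq_exp2l.
  lia.
- have [_ h1] := v_bounds j'; have [h2 _] := v_bounds j.
  have : (2 ^ j'.+1 <= 2 ^ j)%N by rewrite leq_exp2l.
  lia.
Qed.

Lemma child_off j : b j -> ~ on_branch b (v j).*2.
Proof.
move=> bj [[|j'] /= e]; first by have := v_pos j; rewrite /v in e *; lia.
have [e1 e2] : v j' = v j /\ b j' = false.
  rewrite /v in e *; move: e; case: (b j') => /= e; first by exfalso; lia.
  by split => //; lia.
by move: e2; rewrite (v_inj e1) bj.
Qed.

Lemma child_path j k : b j = false -> desc (v j).*2 (tb j) k = branch_node b (j.+1 + k).
Proof. by move=> bj; rewrite branch_desc /= bj addn0. Qed.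

Lemma q_on m : (0 < m)%N -> on_branch b m -> q m.-1 = 2 / 3.
Proof. by move=> m0 h; rewrite /q /qtree prednK // asboolT. Qed.

Lemma q_off m : (0 < m)%N -> ~ on_branch b m -> q m.-1 = 1 / 3.
Proof. by move=> m0 h; rewrite /q /qtree prednK // asboolF. Qed.

Lemma Fp_q_on j p : b j = false -> p \in Fp n (v j).*2 (tb j) (Lj j) -> q p.2 = 2 / 3.
Proof.
move=> bj /Fp_mem [k ->]; rewrite child_path //; apply: q_on; first exact: branch_pos.
by exists (j.+1 + k)%N.
Qed.

Lemma Fp_q_off j t p : b j -> p \in Fp n (v j).*2 t (Lj j) -> q p.2 = 1 / 3.
Proof.
move=> bj /Fp_mem [k ->]; have c0 : (0 < (v j).*2)%N by have := v_pos j; lia.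
apply: q_off; first exact: desc_pos.
exact: off_branch (child_off bj) c0.
Qed.

Lemma test_good j w : ~ Ubad j w -> test (Xs n w) (v j).*2 (Lj j) = ~~ b j.
Proof.
rewrite /Ubad; case bj: (b j) => nU; rewrite /=.
  apply/negbTE/negP; rewrite /test => /existsP [t ht]; apply: nU; apply/ubigP; exists (val t); split.
    by apply: mem_allseq; rewrite size_tuple.
  by rewrite -predE_ubig /= -pathsum_Fp.
case nt: (test _ _ _) => //; move/negbT: nt; rewrite /test => nt; exfalso; apply: nU; rewrite -predE_ubig /= -pathsum_Fp.
have tt_size : size (mkseq (tb j) (Lj j)) == Lj j by rewrite size_mkseq.
move/existsPn: nt => /(_ (Tuple tt_size)) /=.
rewrite (@pathsum_ext _ _ _ _ _ (tb j)) // => i iL.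
by rewrite nth_mkseq.
Qed.

Lemma est_good w : (forall j, ~ Ubad j w) -> forall j, est (Xs n w) j = v j.
Proof.
move=> h; elim=> [//|j IH] /=; rewrite IH test_good //.
by rewrite /v /=; case: (b j); rewrite ?addn0 ?addn1.
Qed.

Lemma wt_ge0 (q0 : R) c : 0 <= q0 <= 1 -> 0 <= wt q0 c.
Proof.
move=> /andP [h0 h1]; apply: prodr_ge0 => x _; case: x => //; lra.
Qed.

Lemma patsum_bound F q0 (pr : pred (seq bool)) M :
  uniq F -> size F = (M.*2)%N -> (forall p, p \in F -> q p.2 = q0) -> 0 <= q0 <= 1 ->
  (forall c, size c = (M.*2)%N -> pr c -> wt q0 c <= (2 / 9) ^+ M) ->
  (P (ubig [seq c <- allseq (size F) | pr c] (pat Zx F)) <= ((8 / 9) ^+ M)%:E)%E.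
Proof.
move=> uF sF hq q01 hw.
apply: (le_trans (mu_ubig P _ (fun c => meas_pat F c))).
rewrite (eq_big_seq (fun c => (wt q0 c)%:E)); last first.
  move=> c; rewrite mem_filter => /andP [_ /allseq_size sc].
  by apply: P_pat => //; rewrite sc.
rewrite big_filter sumEFin lee_fin.
apply: (le_trans (sum_const_le (k := (2 / 9) ^+ M) _ _ _)).
- by move=> c /allseq_size sc pc; apply: hw => //; rewrite sc.
- by move=> c; apply: wt_ge0.
- by rewrite exprn_ge0 //; lra.
rewrite size_allseq sF natrX -mul2n exprM -exprMn; apply: lerXn2r;
  rewrite ?nnegrE //; lra.
Qed.

Lemma Ubad_P j : (P (Ubad j) <= (((4 * (8 / 9) ^+ n) ^+ j.+1))%:E)%E.
Proof.
set M := (n * j.+1)%N.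
have sF t : size (Fp n (v j).*2 t (Lj j)) = (M.*2)%N by rewrite Fp_size /Lj /M; lia.
have c0 : (0 < (v j).*2)%N by have := v_pos j; lia.
have e89 : (8 / 9 : R) ^+ M = ((8 / 9) ^+ n) ^+ j.+1 by rewrite /M exprM.
have nL : (n * Lj j)%N = M.*2 by rewrite /Lj /M; lia.
rewrite /Ubad; case bj: (b j).
  have mi tt : measurable (ubig [seq c <- allseq (size (Fp n (v j).*2 (nth false tt) (Lj j))) |
             (n * Lj j <= (ones c).*2)%N] (pat Zx (Fp n (v j).*2 (nth false tt) (Lj j)))).
    by apply: M_ubig => //; [exact: measurableU | move=> ?; apply: meas_pat].
  apply: (le_trans (mu_ubig P _ mi)).
  apply: le_trans.
    apply: lee_sum => tt _.
    apply: (@patsum_bound _ (1 / 3) _ M) => //.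
    - exact: Fp_uniq.
    - by move=> p; apply: Fp_q_off.
    - by apply/andP; split; lra.
    - move=> c sc pc; apply: wt_bound => //; left; split => //.
      by move: pc; rewrite nL; lia.
  rewrite sumEFin lee_fin.
  have g89 : (0 <= (8 / 9 : R) ^+ M) by rewrite exprn_ge0 //; lra.
  apply: (@le_trans _ _ ((size (allseq (Lj j)))%:R * (8 / 9) ^+ M)).
    by apply: sum_const_le.
  rewrite size_allseq natrX /Lj -mul2n exprM e89 -exprMn.
  by have -> : (2 : R) ^+ 2 = 4 by rewrite expr2; lra.
apply: le_trans.
  apply: (@patsum_bound _ (2 / 3) _ M) => //.
  - exact: Fp_uniq.
  - by move=> p; apply: Fp_q_on.
  - by apply/andP; split; lra.
  - move=> c sc pc; apply: wt_bound => //; right; split => //.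
    by move: pc; rewrite nL; lia.
have g : (0 <= (8 / 9 : R) ^+ n) by rewrite exprn_ge0 //; lra.
rewrite lee_fin e89; apply: lerXn2r; rewrite ?nnegrE //; lra.
Qed.

End level.
Lemma Aest_good n w : (forall j, ~ Ubad n j w) -> forall k, Aest R (Xs n w) k = q k.
Proof.
move=> h k; rewrite /Aest /q /qtree.
have -> : [exists j : 'I_k.+1, est (Xs n w) j == k.+1] =
          [exists j : 'I_k.+1, branch_node b j == k.+1].
  by apply: eq_existsb => j; rewrite (est_good h).
have -> : [exists j : 'I_k.+1, branch_node b j == k.+1] = `[< on_branch b k.+1 >] => //.
apply/existsP/asboolP => [[j /eqP e] | [j e]]; first by exists j.
have jk : (j < k.+1)%N by rewrite -e; exact: branch_gt.
by exists (Ordinal jk); rewrite /= e.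
Qed.

Lemma sup_err_ge0 (a : nat -> R) : (0 <= sup_err a q)%E.
Proof. by apply: le_ereal_sup_tmp; exists (`|a 0%N - q 0%N|)%:E => //; exists 0%N. Qed.

Lemma q_01 k : 0 <= q k <= 1.
Proof. by rewrite /q /qtree; case: ifP => _; apply/andP; split; lra. Qed.

Lemma sup_err_le1 n (s : sample n) : (sup_err (Aest R s) q <= 1)%E.
Proof.
apply: ge_ereal_sup => _ [k _ <-]; rewrite lee_fin.
have := q_01 k; have := Aest_01 R s k => /andP [a0 a1] /andP [q0 q1].
rewrite ler_norml; apply/andP; split; lra.
Qed.

Lemma sup_err_good n w : (forall j, ~ Ubad n j w) -> sup_err (Aest R (Xs n w)) q = 0%E.
Proof.
move=> h; apply/eqP; rewrite eq_le sup_err_ge0 andbT.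
apply: ge_ereal_sup => _ [k _ <-].
by rewrite (Aest_good h) subrr normr0.
Qed.

Lemma series_bound (x : R) : 0 <= x <= 1 / 2 ->
  (\sum_(j <oo) ((x ^+ j.+1)%:E) <= (2 * x)%:E)%E.
Proof.
move=> /andP [x0 x1].
apply: lime_le.
  by apply: is_cvg_nneseries => k _ _; rewrite lee_fin exprn_ge0.
apply: nearW => N; rewrite sumEFin lee_fin.
suff : \sum_(0 <= j < N) x ^+ j.+1 <= 2 * x - 2 * x ^+ N.+1.
  by move=> h; apply: (le_trans h); rewrite lerBlDr lerDl mulr_ge0 ?exprn_ge0.
elim: N => [|N IH]; first by rewrite big_geq // expr1; lra.
rewrite big_nat_recr //=.
have e : x ^+ N.+2 = x * x ^+ N.+1 by rewrite exprS.
have g : 0 <= x ^+ N.+1 by rewrite exprn_ge0.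
rewrite e; nra.
Qed.

Lemma int_bound n : 4 * (8 / 9 : R) ^+ n <= 1 / 2 ->
  (\int[P]_w sup_err (Aest R (Xs n w)) q <= (2 * (4 * (8 / 9) ^+ n))%:E)%E.
Proof.
move=> hx.
pose Bad := \bigcup_j Ubad n j.
have mB : measurable Bad by apply: bigcupT_measurable => j; exact: Ubad_meas.
apply: (le_trans (int_mono P (g := fun w => (\1_Bad w)%:E) _ _)).
- by move=> w; apply: sup_err_ge0.
- move=> w; rewrite indicE; case: (boolP (w \in Bad)) => wB.
    exact: sup_err_le1.
  rewrite sup_err_good // => j Uj; move/negP: wB; apply.
  by rewrite inE; exists j.
rewrite integral_indic // setIT.
apply: le_trans.
  apply: (@measure_sigma_subadditive _ _ _ P Bad (Ubad n)) => //.
  exact: Ubad_meas.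
apply: le_trans.
  apply: (@lee_nneseries _ _ (fun j => (((4 * (8 / 9) ^+ n) ^+ j.+1))%:E)) => //.
  by move=> j _; apply: Ubad_P.
apply: series_bound; rewrite hx andbT mulr_ge0 // exprn_ge0 //; lra.
Qed.

End prob.

Unset Implicit Arguments.

Lemma geo8_cvg (R : realType) :
  (fun n : nat => 2 * (4 * (8 / 9 : R) ^+ n)) @ \oo --> 0.
Proof.
have -> : (fun n : nat => 2 * (4 * (8 / 9 : R) ^+ n)) = geometric 8 (8 / 9).
  by apply/funext => k; rewrite /geometric /= mulrA; congr (_ * _); lra.
by apply: cvg_geometric; rewrite ger0_norm; lra.
Qed.

Lemma geo4_cvg (R : realType) :
  (fun n : nat => 4 * (8 / 9 : R) ^+ n) @ \oo --> 0.
Proof.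
have -> : (fun n : nat => 4 * (8 / 9 : R) ^+ n) = geometric 4 (8 / 9) by [].
by apply: cvg_geometric; rewrite ger0_norm; lra.
Qed.

Theorem mainTheorem7 (R : realType) :
  exists A : forall n : nat, sample n -> nat -> R,
    (forall n (s : sample n) j, 0 <= A n s j <= 1) /\
    (forall n, estimator_measurable (A n)) /\
    (forall (b : nat -> bool) (d : measure_display) (T : measurableType d)
            (P : probability T R) (X : nat -> nat -> T -> bool),
        iid_product_bernoulli P (qtree R b) X ->
        (fun n : nat =>
           (\int[P]_w sup_err (A n (fun (i : 'I_n) (m : nat) => X (i : nat) m w))
                              (qtree R b))%E)
          @ \oo --> 0%E).
Proof.
exists (fun n => @Aest R n); split; first exact: Aest_01.
split; first exact: Aest_meas.
move=> b d T P X H.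
apply: (@squeeze_cvge _ _ _ _ (fun=> 0%E) _
  (fun n => (2 * (4 * (8 / 9 : R) ^+ n))%:E)); last 2 first.
- exact: cvg_cst.
- apply: cvg_EFin; first by apply: nearW.
  exact: geo8_cvg.
have := @cvgr_lt _ _ _ _ _ _ (geo4_cvg R) (1 / 2) ltac:(lra).
apply: filterS => n hn; apply/andP; split.
  by apply: integral_ge0 => w _; apply: sup_err_ge0.
exact: (int_bound H (ltW hn)).
Qed.
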